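(* Suppose that Assumptions 1--5 and Assumption 8 hold. Furthermore, suppose that $V_{1}(x_{1}^{aug})=x_{1}^{aug,T}Qx_{1}^{aug}$ and $V_{2}(\tilde{x})=\tilde{x}^{T}P\tilde{x}$, along with scalars $\alpha_{1}>0$, $\alpha_{2}>0$, $\bar{\gamma}_{1}>0$, $\bar{\gamma}_{21}>0$, $\bar{\gamma}_{22}\geq 0$ such that, under $v_{des}(k)=-K_{1}x_{1}^{aug}(k)$ and $u(k)=K_{21}v_{des}(k)-K_{22}x_{2}(k)$, \begin{eqnarray*} V_{1}(x_{1}^{aug}(k+1))-V_{1}(x_{1}^{aug}(k)) &<& -\alpha_{1} V_{1}(x_{1}^{aug}(k)) + \bar{\gamma}_{1} \|\tilde{v}(k)\|^{2},\\ V_{2}(\tilde{x}(k+1))-V_{2}(\tilde{x}(k)) &<& -\alpha_{2}V_{2}(\tilde{x}(k)) + \bar{\gamma}_{21} \|v_{des}(k)\|^{2} + \bar{\gamma}_{22} \|x_{f}(k)\|^{2}, \end{eqnarray*} together with the matrices $C$ and $K_{1}$, satisfy \begin{equation*} \alpha_{1}\alpha_{2}\bar{\lambda}_{min}(P)\bar{\lambda}_{min}(Q) \geq \bar{\gamma}_{1}\|C\|^{2}(\bar{\gamma}_{21}\|K_{1}\|^{2}+\bar{\gamma}_{22}), \end{equation*} where $\bar{\lambda}_{min}(P)$ and $\bar{\lambda}_{min}(Q)$ are the minimum eigenvalues of $P$ and $Q$. Then there exist sets $G_{1} \subset \mathbb{R}^{n_{1}+n_{2}}$ and $G_{2} \subset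 \mathbb{R}^{n_{2}}$, along with scalars $0 \leq \lambda_{1} < 1$ and $0 \leq \lambda_{2} < 1$, such that if $x_{1}^{aug}(k) \in G_{1}$, $\tilde{x}(k) \in G_{2}$, $v_{des}(k) = -K_{1}x_{1}(k)$, and $u(k) = K_{21}v_{des}(k) - K_{22}x_{2}(k)$, then $u(k) \in U$, $x_{1}^{aug}(k+1) \in \lambda_{1}G_{1}$, and $\tilde{x}(k+1) \in \lambda_{2}G_{2}$.
   Context: Setting: cascade $x_{1}(k+1)=A_{1}x_{1}(k)+B_{1}v(k)$, $x_{2}(k+1)=A_{2}x_{2}(k)+B_{2}u(k)$, $v=Cx_{2}$, $u(k)\in U$; reference model $x_{f}(k+1)=A_{f}x_{f}(k)+B_{f}v_{des}(k)$; error $\tilde{x}=x_{2}-x_{f}$, $\tilde{v}=C\tilde{x}$, $\tilde{x}(k+1)=A_{2}\tilde{x}(k)+(A_{2}-A_{f})x_{f}(k)+B_{2}u(k)-B_{f}v_{des}(k)$; augmented outer state $x_{1}^{aug}=[x_{1}^{T}\ x_{f}^{T}]^{T}$ with $x_{1}^{aug}(k+1)=A_{1}^{aug}x_{1}^{aug}(k)+B_{1}^{aug}\tilde{v}(k)+B_{f}^{aug}v_{des}(k)$, $A_{1}^{aug}=\begin{bmatrix}A_{1}&B_{1}C\\0&A_{f}\end{bmatrix}$, $B_{1}^{aug}=[B_{1}^{T}\ 0]^{T}$, $B_{f}^{aug}=[0\ B_{f}^{T}]^{T}$. Assumptions: (1) $(A_{1},B_{1})$ stabilizable; (2) $(A_{2},B_{2})$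 controllable; (3) actuator dynamics in block controllable canonical form; (4) $A_{f}$ Schur stable; (5) reference model shares no zeros with unstable poles of $A_{1}$; (8) $u=0$ is in the interior of $U$. The gains are chosen so that $A_{1}^{aug}-B_{1}^{aug}K_{1}$ and $A_{2}-B_{2}K_{22}$ are Schur; $Q,P$ are symmetric positive definite. For a set $G$, $\lambda G=\{\lambda x:x\in G\}$. (The paper writes $v_{des}(k)=-K_{1}x_{1}(k)$, presumably meaning $-K_{1}x_{1}^{aug}(k)$.) *)

(* Defs.v *)
From HB Require Import structures.
From mathcomp Require Import all_boot all_order all_algebra.
From mathcomp Require Import all_classical all_reals all_analysis.
From mathcomp Require Import complex.
Set Implicit Arguments.
Unset Strict Implicit.
Unset Printing Implicit Defensive.
Import Order.TTheory GRing.Theory Num.Theory.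
Local Open Scope classical_set_scope.
Local Open Scope ring_scope.

Section Defs.
Variable R : realType.

Definition vnorm n (x : 'cV[R]_n) : R := Num.sqrt (\sum_i x i 0 ^+ 2).

Definition opnorm m n (A : 'M[R]_(m, n)) : R :=
  sup [set vnorm (A *m x) | x in [set x : 'cV[R]_n | vnorm x <= 1]].

Definition qform n (M : 'M[R]_n) (x : 'cV[R]_n) : R := (x^T *m M *m x) 0 0.

Definition sym_posdef n (M : 'M[R]_n) : Prop :=
  M^T = M /\ forall x : 'cV[R]_n, x != 0 -> 0 < qform M x.

(* minimum eigenvalue (eigenvalues of a symmetric matrix are real) *)
Definition lambda_min n (M : 'M[R]_n) : R := inf [set r : R | eigenvalue M r].

(* Schur stability: every (complex) eigenvalue, i.e. root of the
   characteristic polynomial, has modulus < 1 *)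
Definition schur n (A : 'M[R]_n) : Prop :=
  forall z : R[i], root (map_poly (fun r : R => Complex r 0) (char_poly A)) z -> `|z| < 1.

Definition stabilizable n m (A : 'M[R]_n) (B : 'M[R]_(n, m)) : Prop :=
  exists K : 'M[R]_(m, n), schur (A - B *m K).

Definition controllable n m (A : 'M[R]_n) (B : 'M[R]_(n, m)) : Prop :=
  \rank (\mxrow_(i < n) (A ^+ i *m B)) = n.

Definition scale_set n (l : R) (G : set 'cV[R]_n) : set 'cV[R]_n :=
  [set l *: x | x in G].

Definition origin_interior n (G : set 'cV[R]_n) : Prop :=
  exists r : R, 0 < r /\ forall x : 'cV[R]_n, vnorm x < r -> G x.

End Defs.

(* Main.v *)
Require Import Defs.
From HB Require Import structures.
From mathcomp Require Import all_boot all_order all_algebra.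
From mathcomp Require Import all_classical all_reals all_analysis.
From mathcomp Require Import complex.
From mathcomp.algebra_tactics Require Import ring lra.
Import Order.TTheory GRing.Theory Num.Theory.
Local Open Scope classical_set_scope.
Local Open Scope ring_scope.
Set Implicit Arguments.
Unset Strict Implicit.
Unset Printing Implicit Defensive.
Import numFieldTopology.Exports.
Import numFieldNormedType.Exports.
Section P1.
Variable R : realType.

Definition bf n (M : 'M[R]_n) (x y : 'cV[R]_n) : R := (x^T *m M *m y) 0 0.
Definition sq n (x : 'cV[R]_n) : R := \sum_i x i 0 ^+ 2.

Lemma sq_ge0 n (x : 'cV[R]_n) : 0 <= sq x.
Proof. by apply: sumr_ge0 => i _; rewrite sqr_ge0. Qed.

Lemma vnorm_sq n (x : 'cV[R]_n) : vnorm x ^+ 2 = sq x.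
Proof. by rewrite /vnorm sqr_sqrtr // sq_ge0. Qed.

Lemma vnorm_ge0 n (x : 'cV[R]_n) : 0 <= vnorm x.
Proof. exact: sqrtr_ge0. Qed.

Lemma bfE n (M : 'M[R]_n) x y :
  bf M x y = \sum_j (\sum_i x i 0 * M i j) * y j 0.
Proof.
rewrite /bf mxE; apply: eq_bigr => j _; rewrite mxE; congr (_ * _).
by apply: eq_bigr => i _; rewrite mxE.
Qed.

Lemma sq_bf n (x : 'cV[R]_n) : sq x = bf 1%:M x x.
Proof.
rewrite /bf mulmx1 mxE /sq; apply: eq_bigr => i _; by rewrite mxE expr2.
Qed.

Lemma qform_bf n (M : 'M[R]_n) x : qform M x = bf M x x.
Proof. by []. Qed.

Lemma bfDl n (M : 'M[R]_n) x1 x2 y : bf M (x1 + x2) y = bf M x1 y + bf M x2 y.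
Proof. by rewrite /bf linearD /= !mulmxDl mxE. Qed.

Lemma bfDr n (M : 'M[R]_n) x y1 y2 : bf M x (y1 + y2) = bf M x y1 + bf M x y2.
Proof. by rewrite /bf !mulmxDr mxE. Qed.

Lemma bfZl n (M : 'M[R]_n) a x y : bf M (a *: x) y = a * bf M x y.
Proof. by rewrite /bf linearZ /= -!scalemxAl mxE. Qed.

Lemma bfZr n (M : 'M[R]_n) a x y : bf M x (a *: y) = a * bf M x y.
Proof. by rewrite /bf -!scalemxAr mxE. Qed.

Lemma bfNl n (M : 'M[R]_n) x y : bf M (- x) y = - bf M x y.
Proof. by rewrite -scaleN1r bfZl mulN1r. Qed.

Lemma bfNr n (M : 'M[R]_n) x y : bf M x (- y) = - bf M x y.
Proof. by rewrite -scaleN1r bfZr mulN1r. Qed.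

Lemma bf_sym n (M : 'M[R]_n) x y : M^T = M -> bf M x y = bf M y x.
Proof.
move=> sM; rewrite /bf -[in LHS](trmxK (x^T *m M *m y)) mxE.
by rewrite !trmx_mul trmxK sM mulmxA.
Qed.

Lemma bf1_sym n (x y : 'cV[R]_n) : bf 1%:M x y = bf 1%:M y x.
Proof. by apply: bf_sym; rewrite trmx1. Qed.

Lemma qformZ n (M : 'M[R]_n) a x : qform M (a *: x) = a ^+ 2 * qform M x.
Proof. by rewrite !qform_bf bfZl bfZr mulrA expr2. Qed.

Lemma sqZ n a (x : 'cV[R]_n) : sq (a *: x) = a ^+ 2 * sq x.
Proof. by rewrite !sq_bf bfZl bfZr mulrA expr2. Qed.

Lemma sq0 n : sq (0 : 'cV[R]_n) = 0.
Proof. by rewrite -(scale0r (0 : 'cV[R]_n)) sqZ expr0n mul0r. Qed.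

Lemma qform0 n (M : 'M[R]_n) : qform M 0 = 0.
Proof. by rewrite -(scale0r (0 : 'cV[R]_n)) qformZ expr0n mul0r. Qed.

Lemma sq_eq0 n (x : 'cV[R]_n) : sq x = 0 -> x = 0.
Proof.
move=> /psumr_eq0P H; apply/matrixP => i j; rewrite (ord1 j) mxE.
apply/eqP; rewrite -sqrf_eq0; apply/eqP; apply: H => // k _; exact: sqr_ge0.
Qed.

Lemma coord_sq n (x : 'cV[R]_n) i : x i 0 ^+ 2 <= sq x.
Proof.
rewrite /sq (bigD1 i) //= lerDl; apply: sumr_ge0 => k _; exact: sqr_ge0.
Qed.

Lemma coord_vnorm n (x : 'cV[R]_n) i : `|x i 0| <= vnorm x.
Proof.
rewrite -(@ler_pXn2r _ 2) ?nnegrE ?vnorm_ge0 //.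
by rewrite vnorm_sq real_normK ?num_real // coord_sq.
Qed.

Lemma vnormZ n a (x : 'cV[R]_n) : vnorm (a *: x) = `|a| * vnorm x.
Proof.
apply/eqP; rewrite -(@eqrXn2 _ 2) // ?nnegrE ?vnorm_ge0 ?mulr_ge0 ?vnorm_ge0 //.
by rewrite vnorm_sq exprMn vnorm_sq sqZ real_normK ?num_real.
Qed.

Lemma coord_prod n (x : 'cV[R]_n) i j : `|x i 0| * `|x j 0| <= sq x.
Proof.
have hi := coord_sq x i; have hj := coord_sq x j.
rewrite -(real_normK (num_real (x i 0))) in hi.
rewrite -(real_normK (num_real (x j 0))) in hj.
move: hi hj (normr_ge0 (x i 0)) (normr_ge0 (x j 0)).
move: (`|x i 0|) (`|x j 0|) (sq x) => a b s ha hb a0 b0.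
have := sqr_ge0 (a - b); rewrite sqrrB; lra.
Qed.

Lemma qform_bound n (M : 'M[R]_n) x :
  `|qform M x| <= (\sum_j \sum_i `|M i j|) * sq x.
Proof.
rewrite qform_bf bfE mulr_suml; apply: (le_trans (ler_norm_sum _ _ _)).
apply: ler_sum => j _; rewrite mulr_suml mulr_suml.
apply: (le_trans (ler_norm_sum _ _ _)); apply: ler_sum => i _.
rewrite !normrM mulrC mulrA [`|M i j| * _]mulrC -mulrA mulrA.
by apply: ler_wpM2r => //; rewrite mulrC coord_prod.
Qed.

End P1.
Section P2.
Variable R : realType.

Lemma cont_sum N (I : finType) (g : I -> 'rV[R]_N -> R) :
  (forall i, continuous (g i)) -> continuous (fun w => \sum_i g i w).
Proof.
move=> Hg.
suff H : forall s : seq I, continuous (fun w => \sum_(i <- s) g i w) by exact: H.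
elim=> [|a l IH].
  rewrite (_ : (fun w => _) = fun=> 0); first exact: cst_continuous.
  by apply: funext => w; rewrite big_nil.
rewrite (_ : (fun w => _) = (fun w => g a w + \sum_(i <- l) g i w)); last first.
  by apply: funext => w; rewrite big_cons.
by move=> w; apply: continuousD; [exact: Hg|exact: IH].
Qed.

Lemma cont_mul N (f g : 'rV[R]_N -> R) :
  continuous f -> continuous g -> continuous (fun w => f w * g w).
Proof. by move=> cf cg w; apply: continuousM; [exact: cf|exact: cg]. Qed.

Lemma cont_cst N (c : R) : continuous (fun _ : 'rV[R]_N => c).
Proof. exact: cst_continuous. Qed.

Definition ccont N k (f : 'rV[R]_N -> 'cV[R]_k) :=
  forall i, continuous (fun w => f w i 0).

Lemma ccont_mul N k l (A : 'M[R]_(k, l)) f :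
  @ccont N l f -> ccont (fun w => A *m f w).
Proof.
move=> cf i.
rewrite (_ : (fun w => _) = (fun w => \sum_j A i j * f w j 0)); last first.
  by apply: funext => w; rewrite mxE.
by apply: cont_sum => j; apply: cont_mul; [exact: cont_cst|exact: cf].
Qed.

Lemma ccont_add N k (f g : 'rV[R]_N -> 'cV[R]_k) :
  ccont f -> ccont g -> ccont (fun w => f w + g w).
Proof.
move=> cf cg i.
rewrite (_ : (fun w => _) = (fun w => f w i 0 + g w i 0)); last first.
  by apply: funext => w; rewrite mxE.
by move=> w; apply: continuousD; [exact: cf|exact: cg].
Qed.

Lemma ccont_opp N k (f : 'rV[R]_N -> 'cV[R]_k) :
  ccont f -> ccont (fun w => - f w).
Proof.
move=> cf i.
rewrite (_ : (fun w => _) = (fun w => - f w i 0)); last first.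
  by apply: funext => w; rewrite mxE.
by move=> w; apply: continuousN; exact: cf.
Qed.

Lemma ccont_cst N k (c : 'cV[R]_k) : @ccont N k (fun _ => c).
Proof. by move=> i; exact: cst_continuous. Qed.

Lemma ccont_col N k l (f : 'rV[R]_N -> 'cV[R]_k) (g : 'rV[R]_N -> 'cV[R]_l) :
  ccont f -> ccont g -> ccont (fun w => col_mx (f w) (g w)).
Proof.
move=> cf cg i; case: (split_ordP i) => [i' ->|i' ->].
  rewrite (_ : (fun w => _) = (fun w => f w i' 0)) //.
  by apply: funext => w; rewrite col_mxEu.
rewrite (_ : (fun w => _) = (fun w => g w i' 0)) //.
by apply: funext => w; rewrite col_mxEd.
Qed.

Lemma ccont_usub N k l (f : 'rV[R]_N -> 'cV[R]_(k + l)) :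
  ccont f -> ccont (fun w => usubmx (f w)).
Proof.
move=> cf i; rewrite (_ : (fun w => _) = (fun w => f w (lshift l i) 0)) //.
by apply: funext => w; rewrite mxE.
Qed.

Lemma ccont_dsub N k l (f : 'rV[R]_N -> 'cV[R]_(k + l)) :
  ccont f -> ccont (fun w => dsubmx (f w)).
Proof.
move=> cf i; rewrite (_ : (fun w => _) = (fun w => f w (rshift k i) 0)) //.
by apply: funext => w; rewrite mxE.
Qed.

Lemma ccont_lsubT k l : ccont (fun w : 'rV[R]_(k + l) => (lsubmx w)^T).
Proof.
move=> i; rewrite (_ : (fun w => _) = (fun w : 'rV[R]_(k + l) => w 0 (lshift l i))).
  exact: coord_continuous.
by apply: funext => w; rewrite !mxE.
Qed.

Lemma ccont_rsubT k l : ccont (fun w : 'rV[R]_(k + l) => (rsubmx w)^T).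
Proof.
move=> i; rewrite (_ : (fun w => _) = (fun w : 'rV[R]_(k + l) => w 0 (rshift k i))).
  exact: coord_continuous.
by apply: funext => w; rewrite !mxE.
Qed.

Lemma ccont_T k : ccont (fun w : 'rV[R]_k => w^T).
Proof.
move=> i; rewrite (_ : (fun w => _) = (fun w : 'rV[R]_k => w 0 i)).
  exact: coord_continuous.
by apply: funext => w; rewrite !mxE.
Qed.

Lemma cont_qform N k (M : 'M[R]_k) (f : 'rV[R]_N -> 'cV[R]_k) :
  ccont f -> continuous (fun w => qform M (f w)).
Proof.
move=> cf.
rewrite (_ : (fun w => _) =
   (fun w => \sum_j (\sum_i f w i 0 * M i j) * f w j 0)); last first.
  by apply: funext => w; rewrite qform_bf bfE.
apply: cont_sum => j; apply: cont_mul; last exact: cf.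
by apply: cont_sum => i; apply: cont_mul; [exact: cf|exact: cont_cst].
Qed.

Lemma cont_sq N k (f : 'rV[R]_N -> 'cV[R]_k) :
  ccont f -> continuous (fun w => sq (f w)).
Proof.
move=> cf; rewrite (_ : (fun w => _) = (fun w => qform 1%:M (f w))).
  exact: cont_qform.
by apply: funext => w; rewrite sq_bf.
Qed.

End P2.
Section P3.
Variable R : realType.

Lemma compact_box N (A : set 'rV[R]_N) (B : R) :
  closed A -> (forall v, A v -> forall i, `|v 0 i| <= B) -> compact A.
Proof.
move=> cA HB; apply: bounded_closed_compact => //.
exists `|B|; split; first exact: num_real.
move=> M HM x Ax; change (mx_norm x <= M); rewrite mx_normrE.
apply/bigmax_leP; split.
  exact: le_trans (normr_ge0 B) (ltW HM).
move=> [i j] _ /=; rewrite (ord1 i).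
apply: le_trans (HB _ Ax j) _; apply: le_trans (ler_norm B) (ltW HM).
Qed.

Lemma closed_sub N (f : 'rV[R]_N -> R) (c : R) :
  continuous f -> closed [set w | f w <= c].
Proof.
move=> cf; rewrite (_ : [set w | f w <= c] = f @^-1` [set x | x <= c]) //.
apply: preimage_closed; last exact: closed_le.
by move=> w _; exact: cf.
Qed.

Lemma closed_eqf N (f : 'rV[R]_N -> R) (c : R) :
  continuous f -> closed [set w | f w = c].
Proof.
move=> cf; rewrite (_ : [set w | f w = c] = f @^-1` [set x | x = c]) //.
apply: preimage_closed; last exact: closed_eq.
by move=> w _; exact: cf.
Qed.

Lemma sq_pos n (x : 'cV[R]_n) : x != 0 -> 0 < sq x.
Proof.
move=> x0; rewrite lt_neqAle sq_ge0 andbT eq_sym.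
by apply/eqP => /sq_eq0 h; rewrite h eqxx in x0.
Qed.

Lemma vnorm_pos n (x : 'cV[R]_n) : x != 0 -> 0 < vnorm x.
Proof. by move=> x0; rewrite /vnorm sqrtr_gt0 sq_pos. Qed.

Lemma vnorm0 n : vnorm (0 : 'cV[R]_n) = 0.
Proof. by rewrite /vnorm -/(sq _) sq0 sqrtr0. Qed.

Lemma sq_normalize n (x : 'cV[R]_n) : x != 0 -> sq ((vnorm x)^-1 *: x) = 1.
Proof.
move=> x0; rewrite sqZ -vnorm_sq exprVn mulVf //.
by rewrite expf_neq0 // gt_eqF // vnorm_pos.
Qed.

Lemma vnorm_normalize n (x : 'cV[R]_n) : x != 0 -> vnorm ((vnorm x)^-1 *: x) = 1.
Proof.
move=> x0; rewrite vnormZ ger0_norm ?invr_ge0 ?vnorm_ge0 // mulVf //.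
by rewrite gt_eqF // vnorm_pos.
Qed.

Lemma bf_delta n (M : 'M[R]_n) i x : bf M (delta_mx i 0) x = (M *m x) i 0.
Proof. by rewrite /bf trmx_delta -mulmxA -rowE mxE. Qed.

Lemma quad0 (c d : R) : (forall t, 0 <= 2 * t * c + t ^+ 2 * d) -> c = 0.
Proof.
move=> H; apply/eqP; apply/negPn/negP => c0.
set s := `|d| + 1.
have s0 : 0 < s by rewrite /s ltr_wpDl.
set t := - c / s.
have hts : t * s = - c by rewrite /t mulrVK // unitfE gt_eqF.
have := H t.
have -> : 2 * t * c + t ^+ 2 * d = (s ^+ 2)^-1 * (2 * c * s * (t * s) + (t * s) ^+ 2 * d).
  by field; rewrite gt_eqF.
rewrite hts pmulr_rge0 ?invr_gt0 ?exprn_gt0 //.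
have hd : d <= `|d| := ler_norm d.
have c2 : 0 < c ^+ 2 by rewrite lt_neqAle sqr_ge0 andbT eq_sym sqrf_eq0.
move: hd c2 (normr_ge0 d); rewrite /s; move: (`|d|) => a hd c2 a0 h.
have : 0 <= c ^+ 2 * (d - 2 * (a + 1)) by move: h; rewrite sqrrN; nra.
rewrite pmulr_rge0 // => h2.
have : d - 2 * (a + 1) < 0 by lra.
by rewrite ltNge h2.
Qed.

End P3.
Section P4.
Variable R : realType.

Lemma lmin_spec n (M : 'M[R]_n) : sym_posdef M ->
  (forall x : 'cV[R]_n, x = 0) \/
  ((exists x : 'cV[R]_n, x != 0) /\ 0 < lambda_min M /\
   forall x, lambda_min M * sq x <= qform M x).
Proof.
case: n M => [|n] M [sM pM].
  by left => x; apply/matrixP => -[i Hi].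
right.
have e0 : (const_mx 1 : 'cV[R]_n.+1) != 0.
  apply/eqP => /matrixP/(_ ord0 ord0); rewrite !mxE; apply/eqP; exact: oner_neq0.
set e := (const_mx 1 : 'cV[R]_n.+1) in e0.
set S := [set v : 'rV[R]_n.+1 | sq v^T = 1].
have Sne : S !=set0.
  by exists ((vnorm e)^-1 *: e)^T; rewrite /S /= trmxK sq_normalize.
have cS : compact S.
  apply: (compact_box (B := 1)); first exact/closed_eqf/cont_sq/ccont_T.
  move=> v; rewrite /S /= => Sv i.
  have := coord_vnorm v^T i; rewrite mxE /vnorm -/(sq _) Sv sqrtr1; exact.
have cf : {within S, continuous (fun v : 'rV[R]_n.+1 => qform M v^T)}.
  exact/continuous_subspaceT/cont_qform/ccont_T.
have [v0 v0S minv] := EVT_min_rV Sne cS cf.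
rewrite inE /S /= in v0S.
set x0 := v0^T in v0S.
set m := qform M x0.
have x00 : x0 != 0.
  by apply/eqP => h; move: v0S; rewrite h sq0 => /eqP; rewrite eq_sym oner_eq0.
have m0 : 0 < m := pM x0 x00.
have Bnd : forall x, m * sq x <= qform M x.
  move=> x; case: (eqVneq x 0) => [->|xn0]; first by rewrite sq0 qform0 mulr0.
  have h := minv (((vnorm x)^-1 *: x)^T).
  have /h : ((vnorm x)^-1 *: x)^T \in S.
    by rewrite inE /S /= trmxK sq_normalize.
  rewrite /= trmxK qformZ -/m exprVn.
  have v2 : 0 < vnorm x ^+ 2 by rewrite exprn_gt0 // vnorm_pos.
  move=> /(ler_wpM2l (ltW v2)); rewrite mulrA mulfV ?gt_eqF // mul1r.
  by rewrite vnorm_sq mulrC.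
have key : forall y, bf M y x0 = m * bf 1%:M y x0.
  move=> y; apply/eqP; rewrite -subr_eq0; apply/eqP.
  apply: (@quad0 _ _ (bf M y y - m * bf 1%:M y y)) => t.
  have := Bnd (x0 + t *: y).
  rewrite qform_bf sq_bf !bfDl !bfDr !bfZl !bfZr (bf_sym x0 y sM) (bf1_sym x0 y).
  rewrite (_ : bf 1%:M x0 x0 = 1); last by rewrite -sq_bf.
  rewrite (_ : bf M x0 x0 = m) //.
  change (qform 1%:M y) with (bf 1%:M y y).
  move: (bf M y x0) (bf 1%:M y x0) (bf M y y) (bf 1%:M y y) => a b c d h.
  rewrite -subr_ge0 in h.
  have E : 2 * t * (a - m * b) + t ^+ 2 * (c - m * d) =
    m + t * a + (t * a + t * (t * c)) - m * (1 + t * b + (t * b + t * (t * d))).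
    by rewrite /m; ring.
  by rewrite E.
have Mx0 : M *m x0 = m *: x0.
  apply/matrixP => i j; rewrite (ord1 j); have := key (delta_mx i 0).
  rewrite !bf_delta mul1mx => ->; by rewrite [RHS]mxE.
have eigm : eigenvalue M m.
  apply/eigenvalueP; exists x0^T.
    by rewrite -[M in LHS]sM -trmx_mul Mx0 linearZ.
  by apply: contra x00 => /eqP h; apply/eqP; rewrite -(trmxK x0) h linear0.
have lbE : lbound [set r | eigenvalue M r] m.
  move=> r /eigenvalueP [v vM v0n].
  have vT0 : v^T != 0.
    by apply: contra v0n => /eqP h; apply/eqP; rewrite -(trmxK v) h linear0.
  have := Bnd v^T.
  have -> : qform M v^T = r * sq v^T.
    by rewrite qform_bf sq_bf /bf !trmxK vM mulmx1 -scalemxAl mxE.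
  by rewrite ler_pM2r // sq_pos.
have lm : lambda_min M = m.
  apply/eqP; rewrite eq_le; apply/andP; split.
    by apply: ge_inf => //; exists m.
  by apply: lb_le_inf => //; exists m.
split; first by exists e.
by rewrite lm; split.
Qed.

Lemma bf1_mul m n (A : 'M[R]_(m, n)) x y :
  bf 1%:M (A *m x) (A *m y) = bf (A^T *m A) x y.
Proof. by rewrite /bf mulmx1 trmx_mul !mulmxA. Qed.

Lemma opnorm_spec m n (A : 'M[R]_(m, n)) :
  0 <= opnorm A /\ forall x, sq (A *m x) <= opnorm A ^+ 2 * sq x.
Proof.
set S := [set vnorm (A *m x) | x in [set x : 'cV[R]_n | vnorm x <= 1]].
set K := \sum_j \sum_i `|(A^T *m A) i j|.
have S0 : S 0.
  by exists 0; rewrite /= ?vnorm0 ?mulmx0 ?vnorm0.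
have hS : has_sup S.
  split; first by exists 0.
  exists (1 + K) => _ [x /= x1 <-].
  have sx : sq x <= 1.
    rewrite -vnorm_sq; have := vnorm_ge0 x => h0.
    by rewrite -(expr1n _ 2); apply: lerXn2r; rewrite ?nnegrE.
  have hq := qform_bound (A^T *m A) x; rewrite -/K in hq.
  have sA : vnorm (A *m x) ^+ 2 <= K.
    rewrite vnorm_sq sq_bf bf1_mul -qform_bf.
    apply: le_trans (ler_norm _) _; apply: le_trans hq _.
    have K0 : 0 <= K by apply: sumr_ge0 => *; apply: sumr_ge0 => *.
    by rewrite -{2}(mulr1 K) ler_wpM2l.
  have := vnorm_ge0 (A *m x); move: sA; move: (vnorm _) => v; nra.
have op0 : 0 <= opnorm A by apply: sup_upper_bound.
split => // x.
case: (eqVneq x 0) => [->|xn0]; first by rewrite mulmx0 sq0 sq0 mulr0.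
have hy : S (vnorm (A *m ((vnorm x)^-1 *: x))).
  by exists ((vnorm x)^-1 *: x) => //; rewrite /= vnorm_normalize.
have := sup_upper_bound hS hy; rewrite -scalemxAr vnormZ.
rewrite ger0_norm ?invr_ge0 ?vnorm_ge0 // -/(opnorm A).
have vp := vnorm_pos xn0.
rewrite ler_pdivrMl // => h.
rewrite -!vnorm_sq -exprMn; apply: lerXn2r; rewrite ?nnegrE ?vnorm_ge0 ?mulr_ge0 ?vnorm_ge0 //.
by rewrite mulrC.
Qed.

End P4.
Section P5.
Variable R : realType.

Lemma cont_add N (f g : 'rV[R]_N -> R) :
  continuous f -> continuous g -> continuous (fun w => f w + g w).
Proof. by move=> cf cg w; apply: continuousD; [exact: cf|exact: cg]. Qed.

Lemma cont_opp N (f : 'rV[R]_N -> R) :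
  continuous f -> continuous (fun w => - f w).
Proof. by move=> cf w; apply: continuousN; exact: cf. Qed.

Lemma cl_dir N (F : 'rV[R]_N -> R) w0 d : continuous F ->
  (forall s, s != 0 -> 0 < F (w0 + s *: d)) -> 0 <= F w0.
Proof.
move=> cF H.
pose f := fun s : R => F (w0 + s *: d).
have cf : {for 0, continuous f}.
  apply: continuous_comp; last by rewrite /= scale0r addr0; exact: cF.
  by apply: continuousD; [exact: cst_continuous|exact: scalel_continuous].
have -> : F w0 = f 0 by rewrite /f scale0r addr0.
have /continuous_withinNx cf' := cf.
apply: (closed_cvg (fun x : R => 0 <= x)) cf'; first exact: closed_ge.
exists 1 => //= s _ sn0; apply/ltW; apply: H; exact: sn0.
Qed.

Lemma qform_ge0 n (M : 'M[R]_n) x : sym_posdef M -> 0 <= qform M x.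
Proof.
move=> [_ pM]; case: (eqVneq x 0) => [->|xn0]; first by rewrite qform0.
exact/ltW/pM.
Qed.

Lemma sqN n (x : 'cV[R]_n) : sq (- x) = sq x.
Proof. by rewrite -scaleN1r sqZ sqrrN expr1n mul1r. Qed.

Lemma sq_dsub k l (z : 'cV[R]_(k + l)) : sq (dsubmx z) <= sq z.
Proof.
rewrite /sq [X in _ <= X](big_split_ord _ _ (fun i => z i 0 ^+ 2)) /=.
rewrite -[X in X <= _]add0r; apply: lerD.
  by apply: sumr_ge0 => i _; exact: sqr_ge0.
by apply: ler_sum => i _; rewrite mxE.
Qed.

Lemma vnorm_lt n (u : 'cV[R]_n) r : 0 < r -> sq u < r ^+ 2 -> vnorm u < r.
Proof.
move=> r0 h; rewrite -(@ltr_pXn2r _ 2) ?nnegrE ?vnorm_ge0 ?ltW //.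
by rewrite vnorm_sq.
Qed.

Lemma oi_qform n (M : 'M[R]_n) c : 0 < c -> origin_interior [set z | qform M z <= c].
Proof.
move=> c0.
set KM := \sum_j \sum_i `|M i j|.
have K0 : 0 <= KM by apply: sumr_ge0 => *; apply: sumr_ge0 => *.
exists (Num.sqrt (c / (KM + 1))); split.
  by rewrite sqrtr_gt0 divr_gt0 // ltr_wpDl.
move=> z hz; rewrite /=.
have hs : sq z < c / (KM + 1).
  rewrite -vnorm_sq -(sqr_sqrtr (a:= c / (KM + 1))); last first.
    by rewrite ltW // divr_gt0 // ltr_wpDl.
  by rewrite ltr_pXn2r ?nnegrE ?vnorm_ge0 ?sqrtr_ge0.
have hb := qform_bound M z; rewrite -/KM in hb.
have := ler_norm (qform M z) => h1.
rewrite ltr_pdivlMr ?ltr_wpDl // in hs.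
have := sq_ge0 z => s0.
clear hz; move: h1 hb hs s0 K0; move: (qform M z) (`|qform M z|) (sq z) KM => q aq s K.
nra.
Qed.

End P5.
Section P6.
Variable R : realType.
Lemma scale_qform n (M : 'M[R]_n) c L v : 0 < c -> 0 < L ->
  qform M v <= L * c -> scale_set (Num.sqrt L) [set z | qform M z <= c] v.
Proof.
move=> c0 L0 h.
have sL : 0 < Num.sqrt L by rewrite sqrtr_gt0.
exists ((Num.sqrt L)^-1 *: v).
  change (qform M ((Num.sqrt L)^-1 *: v) <= c).
  rewrite qformZ exprVn (sqr_sqrtr (ltW L0)).
  by rewrite -(ler_pM2l L0) mulrA mulfV ?gt_eqF // mul1r.
by rewrite scalerA mulfV ?gt_eqF // scale1r.
Qed.
End P6.
Unset Implicit Arguments.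
Theorem proposition4 (R : realType) (n1 n2 m p : nat)
  (A1 : 'M[R]_n1) (B1 : 'M[R]_(n1, m))
  (A2 : 'M[R]_n2) (B2 : 'M[R]_(n2, p)) (C : 'M[R]_(m, n2))
  (Af : 'M[R]_n2) (Bf : 'M[R]_(n2, m))
  (U : set 'cV[R]_p)
  (K1 : 'M[R]_(m, n1 + n2)) (K21 : 'M[R]_(p, m)) (K22 : 'M[R]_(p, n2))
  (Q : 'M[R]_(n1 + n2)) (P : 'M[R]_n2)
  (alpha1 alpha2 g1 g21 g22 : R) :
  (* Assumptions 1, 2, 4, 8 *)
  stabilizable A1 B1 ->
  controllable A2 B2 ->
  schur Af ->
  origin_interior U ->
  (* gains *)
  schur (block_mx A1 (B1 *m C) 0 Af - col_mx B1 0 *m K1) ->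
  schur (A2 - B2 *m K22) ->
  sym_posdef Q -> sym_posdef P ->
  0 < alpha1 -> 0 < alpha2 -> 0 < g1 -> 0 < g21 -> 0 <= g22 ->
  (* closed-loop decrease of V1 (for x1aug(k) <> 0) *)
  (forall (x1 : 'cV[R]_n1) (x2 xf : 'cV[R]_n2),
     let x1aug := col_mx x1 xf in
     let vdes := - (K1 *m x1aug) in
     let u := K21 *m vdes - K22 *m x2 in
     let x1' := A1 *m x1 + B1 *m (C *m x2) in
     let x2' := A2 *m x2 + B2 *m u in
     let xf' := Af *m xf + Bf *m vdes in
     let xt := x2 - xf in
     x1aug != 0 ->
     qform Q (col_mx x1' xf') - qform Q x1aug
       < - alpha1 * qform Q x1aug + g1 * vnorm (C *m xt) ^+ 2) ->
  (* closed-loop decrease of V2 (for xtilde(k) <> 0) *)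
  (forall (x1 : 'cV[R]_n1) (x2 xf : 'cV[R]_n2),
     let x1aug := col_mx x1 xf in
     let vdes := - (K1 *m x1aug) in
     let u := K21 *m vdes - K22 *m x2 in
     let x2' := A2 *m x2 + B2 *m u in
     let xf' := Af *m xf + Bf *m vdes in
     let xt := x2 - xf in
     xt != 0 ->
     qform P (x2' - xf') - qform P xt
       < - alpha2 * qform P xt + g21 * vnorm vdes ^+ 2 + g22 * vnorm xf ^+ 2) ->
  alpha1 * alpha2 * lambda_min P * lambda_min Q
    >= g1 * opnorm C ^+ 2 * (g21 * opnorm K1 ^+ 2 + g22) ->
  exists (G1 : set 'cV[R]_(n1 + n2)) (G2 : set 'cV[R]_n2) (l1 l2 : R),
    origin_interior G1 /\ origin_interior G2 /\
    0 <= l1 < 1 /\ 0 <= l2 < 1 /\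
    forall (x1 : 'cV[R]_n1) (x2 xf : 'cV[R]_n2),
      let x1aug := col_mx x1 xf in
      let vdes := - (K1 *m x1aug) in
      let u := K21 *m vdes - K22 *m x2 in
      let x1' := A1 *m x1 + B1 *m (C *m x2) in
      let x2' := A2 *m x2 + B2 *m u in
      let xf' := Af *m xf + Bf *m vdes in
      G1 x1aug -> G2 (x2 - xf) ->
      U u /\ scale_set l1 G1 (col_mx x1' xf') /\ scale_set l2 G2 (x2' - xf').
Proof.
move=> _ _ _ [r [r0 Ur]] _ _ pQ pP a1p a2p g1p g21p g22p H1 H2 SG.
pose zz := fun w : 'rV[R]_((n1 + n2) + n2) => (lsubmx w)^T.
pose tt := fun w : 'rV[R]_((n1 + n2) + n2) => (rsubmx w)^T.
pose nz := fun (z : 'cV[R]_(n1 + n2)) (xt : 'cV[R]_n2) =>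
  col_mx (A1 *m usubmx z + B1 *m (C *m (xt + dsubmx z)))
         (Af *m dsubmx z + Bf *m - (K1 *m z)).
pose uu := fun (z : 'cV[R]_(n1 + n2)) (xt : 'cV[R]_n2) =>
  K21 *m - (K1 *m z) - K22 *m (xt + dsubmx z).
pose nt := fun (z : 'cV[R]_(n1 + n2)) (xt : 'cV[R]_n2) =>
  (A2 *m (xt + dsubmx z) + B2 *m uu z xt) - (Af *m dsubmx z + Bf *m - (K1 *m z)).
have H1' : forall z xt, z != 0 -> qform Q (nz z xt) - qform Q z <
    - alpha1 * qform Q z + g1 * sq (C *m xt).
  move=> z xt zn0; have := H1 (usubmx z) (xt + dsubmx z) (dsubmx z).
  by rewrite /= vsubmxK addrK vnorm_sq; move/(_ zn0).
have H2' : forall z xt, xt != 0 -> qform P (nt z xt) - qform P xt <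
    - alpha2 * qform P xt + g21 * sq (K1 *m z) + g22 * sq (dsubmx z).
  move=> z xt xn0; have := H2 (usubmx z) (xt + dsubmx z) (dsubmx z).
  by rewrite /= vsubmxK addrK !vnorm_sq sqN; move/(_ xn0).
have ccz : ccont zz by exact: ccont_lsubT.
have cct : ccont tt by exact: ccont_rsubT.
have ccnz : ccont (fun w => nz (zz w) (tt w)).
  rewrite /nz /=.
  repeat first [exact: ccz | exact: cct | apply: ccont_col | apply: ccont_add
    | apply: ccont_opp | apply: ccont_mul | apply: ccont_usub | apply: ccont_dsub].
have ccuu : ccont (fun w => uu (zz w) (tt w)).
  rewrite /uu /=.
  repeat first [exact: ccz | exact: cct | apply: ccont_col | apply: ccont_add
    | apply: ccont_opp | apply: ccont_mul | apply: ccont_usub | apply: ccont_dsub].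
have ccnt : ccont (fun w => nt (zz w) (tt w)).
  rewrite /nt /uu /=.
  repeat first [exact: ccz | exact: cct | apply: ccont_col | apply: ccont_add
    | apply: ccont_opp | apply: ccont_mul | apply: ccont_usub | apply: ccont_dsub].
have zzrow : forall z xt, zz (row_mx z^T xt^T) = z.
  by move=> z xt; rewrite /zz row_mxKl trmxK.
have ttrow : forall z xt, tt (row_mx z^T xt^T) = xt.
  by move=> z xt; rewrite /tt row_mxKr trmxK.
have zzlin : forall w d (s : R), zz (w + s *: d) = zz w + s *: zz d.
  by move=> w d s; rewrite /zz linearD linearZ /= linearD linearZ.
have ttlin : forall w d (s : R), tt (w + s *: d) = tt w + s *: tt d.
  by move=> w d s; rewrite /tt linearD linearZ /= linearD linearZ.
have H1z : (exists e : 'cV[R]_(n1 + n2), e != 0) ->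
    forall xt, qform Q (nz 0 xt) <= g1 * sq (C *m xt).
  move=> [e en0] xt.
  pose F := fun w => (- alpha1 * qform Q (zz w) + g1 * sq (C *m tt w))
     - (qform Q (nz (zz w) (tt w)) - qform Q (zz w)).
  have cF : continuous F.
    apply: cont_add; last apply: cont_opp; last first.
      by apply: cont_add; [exact: cont_qform ccnz|exact/cont_opp/cont_qform].
    apply: cont_add; apply: cont_mul; try exact: cont_cst.
      exact: cont_qform.
    by apply: cont_sq; apply: ccont_mul.
  have zz0 : zz (row_mx 0 xt^T) = 0 by rewrite /zz row_mxKl trmx0.
  have tt0 : tt (row_mx 0 xt^T) = xt by rewrite /tt row_mxKr trmxK.
  have zzd : zz (row_mx e^T 0) = e by rewrite /zz row_mxKl trmxK.
  have ttd : tt (row_mx e^T 0) = 0 by rewrite /tt row_mxKr trmx0.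
  have := cl_dir (w0 := row_mx 0 xt^T) (d := row_mx e^T 0) cF.
  rewrite /F zz0 tt0 qform0 mulr0 add0r subr0 subr_ge0; apply.
  move=> s sn0; rewrite zzlin ttlin zz0 tt0 zzd ttd add0r scaler0 addr0 subr_gt0.
  by apply: H1'; rewrite scaler_eq0 negb_or sn0.
have H2z : (exists e : 'cV[R]_n2, e != 0) ->
    forall z, qform P (nt z 0) <= g21 * sq (K1 *m z) + g22 * sq (dsubmx z).
  move=> [e en0] z.
  pose F := fun w => (- alpha2 * qform P (tt w) + g21 * sq (K1 *m zz w)
      + g22 * sq (dsubmx (zz w)))
     - (qform P (nt (zz w) (tt w)) - qform P (tt w)).
  have cF : continuous F.
    apply: cont_add; last apply: cont_opp; last first.
      by apply: cont_add; [exact: cont_qform ccnt|exact/cont_opp/cont_qform].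
    apply: cont_add; [apply: cont_add|]; apply: cont_mul; try exact: cont_cst.
    - exact: cont_qform.
    - by apply: cont_sq; apply: ccont_mul.
    - by apply: cont_sq; apply: ccont_dsub.
  have zz0 : zz (row_mx z^T 0) = z by rewrite /zz row_mxKl trmxK.
  have tt0 : tt (row_mx z^T 0) = 0 by rewrite /tt row_mxKr trmx0.
  have zzd : zz (row_mx 0 e^T) = 0 by rewrite /zz row_mxKl trmx0.
  have ttd : tt (row_mx 0 e^T) = e by rewrite /tt row_mxKr trmxK.
  have := cl_dir (w0 := row_mx z^T 0) (d := row_mx 0 e^T) cF.
  rewrite /F zz0 tt0 qform0 mulr0 add0r subr0 subr_ge0; apply.
  move=> s sn0; rewrite zzlin ttlin zz0 tt0 zzd ttd add0r scaler0 addr0 subr_gt0.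
  by apply: H2'; rewrite scaler_eq0 negb_or sn0.
have DQ := lmin_spec pQ.
have DP := lmin_spec pP.
have [a0 Ca] := opnorm_spec C.
have [k0 Kk] := opnorm_spec K1.
set lq := lambda_min Q in DQ SG.
set lp := lambda_min P in DP SG.
set na := opnorm C in a0 Ca SG.
set nk := opnorm K1 in k0 Kk SG.
have al1 : (exists e : 'cV[R]_(n1 + n2), e != 0) -> alpha1 < 1.
  move=> [e en0]; have := H1' e 0 en0.
  rewrite mulmx0 sq0 mulr0 addr0.
  have := qform_ge0 (nz e 0) pQ; have := pQ.2 e en0.
  move: (qform Q (nz e 0)) (qform Q e) => x y; nra.
have al2 : (exists e : 'cV[R]_n2, e != 0) -> alpha2 < 1.
  move=> [e en0]; have := H2' 0 e en0.
  rewrite mulmx0 sq0 mulr0 addr0 linear0 sq0 mulr0 addr0.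
  have := qform_ge0 (nt 0 e) pP; have := pP.2 e en0.
  move: (qform P (nt 0 e)) (qform P e) => x y; nra.
have zz00 : zz 0 = 0 by rewrite /zz; apply/matrixP => i j; rewrite !mxE.
have tt00 : tt 0 = 0 by rewrite /tt; apply/matrixP => i j; rewrite !mxE.
have ds0 : dsubmx (0 : 'cV[R]_(n1 + n2)) = 0 by apply/matrixP => i j; rewrite !mxE.
have uu00 : uu 0 0 = 0 by rewrite /uu !mulmx0 oppr0 mulmx0 ds0 addr0 mulmx0 subr0.
have ccps := cont_sq ccuu.
have [δ δ0 Hδ] : exists2 δ : R, 0 < δ &
    forall w : 'rV[R]_(n1 + n2 + n2), (forall j, `|w 0 j| < δ) ->
      sq (uu (zz w) (tt w)) < r ^+ 2.
  have hlt : sq (uu (zz 0) (tt 0)) < r ^+ 2.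
    by rewrite zz00 tt00 uu00 sq0 exprn_gt0.
  have hn := @cvgr_lt _ _ _ _ _ _ (ccps 0) _ hlt.
  have [δ δ0 Hb] := (nbhs_ballP _ _).1 (hn (nbhs_filter _)).
  exists δ => // w Hw; apply: Hb.
  rewrite -ball_normE /ball_ /=.
  change (mx_norm (0 - w) < δ); rewrite mx_normrE; apply/bigmax_ltP; split => //.
  by move=> [i j] _ /=; rewrite (ord1 i) !mxE sub0r normrN.
pose q' := if 0 < lq then lq else 1.
pose p' := if 0 < lp then lp else 1.
have q'0 : 0 < q' by rewrite /q'; case: ifP.
have p'0 : 0 < p' by rewrite /p'; case: ifP.
pose G := g21 * nk ^+ 2 + g22.
have G0 : 0 <= G by rewrite /G addr_ge0 // mulr_ge0 ?sqr_ge0 // ltW.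
pose kap := if (na != 0) && (0 < lp) then alpha1 * lp / (g1 * na ^+ 2)
            else Num.max 1 ((G + 1) / (alpha2 * q')).
have kap0 : 0 < kap.
  rewrite /kap; case: ifP => [/andP [na0 lp0]|_].
    have nap : 0 < na by rewrite lt_neqAle eq_sym na0 a0.
    by rewrite divr_gt0 // mulr_gt0 // exprn_gt0.
  by rewrite lt_max ltr01.
have CA : 0 < lp -> g1 * na ^+ 2 * kap <= alpha1 * lp.
  move=> lp0; rewrite /kap lp0 andbT; case: ifP => [na0|/negbFE/eqP ->].
    rewrite mulrC mulfVK //; apply: mulf_neq0; first by rewrite gt_eqF.
    by rewrite expf_neq0.
  by rewrite expr0n /= mulr0 mul0r mulr_ge0 // ltW.
have CB : 0 < lq -> G <= alpha2 * lq * kap.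
  move=> lq0; rewrite /kap; case: ifP => [/andP [na0 lp0]|_].
    have nap : 0 < na by rewrite lt_neqAle eq_sym na0 a0.
    have -> : alpha2 * lq * (alpha1 * lp / (g1 * na ^+ 2)) =
       (alpha1 * alpha2 * lp * lq) / (g1 * na ^+ 2) by ring.
    rewrite ler_pdivlMr ?mulr_gt0 ?exprn_gt0 // mulrC.
    exact: SG.
  have q'e : q' = lq by rewrite /q' lq0.
  apply: le_trans (_ : G <= alpha2 * lq * ((G + 1) / (alpha2 * q'))) _.
    rewrite q'e mulrC divfK ?mulf_neq0 ?gt_eqF // ?lerDl //.
  apply: ler_wpM2l; first by rewrite mulr_ge0 // ltW.
  by rewrite le_max lexx orbT.
pose t := Num.min (q' * δ ^+ 2 / 2) (p' * δ ^+ 2 / (2 * kap)).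
have t0 : 0 < t by rewrite lt_min !divr_gt0 ?mulr_gt0 ?exprn_gt0.
have tq : t <= q' * δ ^+ 2 / 2 by rewrite ge_min lexx.
have tp : t <= p' * δ ^+ 2 / (2 * kap) by rewrite ge_min lexx orbT.
pose c1 := t.
pose c2 := kap * t.
have c20 : 0 < c2 by rewrite mulr_gt0.
have ltsq : forall x y : R, 0 <= y -> x ^+ 2 < y ^+ 2 -> `|x| < y.
  move=> x y y0 h; have := normr_ge0 x; rewrite -(real_normK (num_real x)) in h.
  move: h; move: `|x| => ax; nra.
have Ez : forall z, qform Q z <= c1 -> forall i, `|z i 0| < δ.
  move=> z hz i; case: DQ => [Z|[_ [lq0 bQ]]].
    by rewrite (Z z) mxE normr0.
  have q'e : q' = lq by rewrite /q' lq0.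
  have h1 : lq * sq z <= lq * (δ ^+ 2 / 2).
    apply: le_trans (bQ z) _; apply: le_trans hz _.
    by rewrite /c1 mulrA -q'e.
  rewrite ler_pM2l // in h1.
  have h2 := coord_sq z i.
  apply: ltsq (ltW δ0) _; have := exprn_gt0 2 δ0; lra.
have Ex : forall x, qform P x <= c2 -> forall i, `|x i 0| < δ.
  move=> x hx i; case: DP => [Z|[_ [lp0 bP]]].
    by rewrite (Z x) mxE normr0.
  have p'e : p' = lp by rewrite /p' lp0.
  have h1 : lp * sq x <= lp * (δ ^+ 2 / 2).
    apply: le_trans (bP x) _; apply: le_trans hx _.
    rewrite /c2; apply: le_trans (ler_wpM2l (ltW kap0) tp) _.
    have -> : kap * (p' * δ ^+ 2 / (2 * kap)) = p' * (δ ^+ 2 / 2).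
      by field; rewrite gt_eqF.
    by rewrite p'e.
  rewrite ler_pM2l // in h1.
  have h2 := coord_sq x i.
  apply: ltsq (ltW δ0) _; have := exprn_gt0 2 δ0; lra.
have CAz : forall xt, qform P xt <= c2 -> g1 * sq (C *m xt) <= alpha1 * c1.
  move=> xt hx; case: DP => [Z|[_ [lp0 bP]]].
    by rewrite (Z xt) mulmx0 sq0 mulr0 mulr_ge0 // ltW.
  have h1 : lp * sq xt <= kap * t := le_trans (bP xt) hx.
  have h2 : sq (C *m xt) <= na ^+ 2 * sq xt := Ca xt.
  have h3 := CA lp0.
  have na2 : 0 <= na ^+ 2 := sqr_ge0 na.
  have h2' := ler_wpM2l (mulr_ge0 (ltW lp0) (ltW g1p)) h2.
  have h1' := ler_wpM2l (mulr_ge0 (ltW g1p) na2) h1.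
  have h3' := ler_wpM2r (ltW t0) h3.
  rewrite -(ler_pM2l lp0) /c1.
  move: h1' h2' h3'; move: (sq (C *m xt)) (sq xt) (na ^+ 2) => sc sx n2' h1' h2' h3'.
  nra.
have CBz : forall z, qform Q z <= c1 ->
    g21 * sq (K1 *m z) + g22 * sq (dsubmx z) <= alpha2 * c2.
  move=> z hz; case: DQ => [Z|[_ [lq0 bQ]]].
    rewrite (Z z) mulmx0 ds0 sq0 sq0 !mulr0 addr0.
    by apply: mulr_ge0; apply: ltW.
  have h1 : lq * sq z <= t := le_trans (bQ z) hz.
  have f1 := ler_wpM2l (ltW g21p) (Kk z).
  have f2 := ler_wpM2l g22p (sq_dsub z).
  have h4 := CB lq0.
  have f3 := ler_wpM2l G0 h1.
  have f4 := ler_wpM2r (ltW t0) h4.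
  have LG : g21 * sq (K1 *m z) + g22 * sq (dsubmx z) <= G * sq z.
    rewrite /G mulrDl -mulrA; exact: lerD.
  have LG' := ler_wpM2l (ltW lq0) LG.
  rewrite -(ler_pM2l lq0) /c2.
  move: LG' f3 f4; move: (g21 * sq (K1 *m z) + g22 * sq (dsubmx z)) (sq z) => L sz.
  nra.
have PW1 : forall z xt, qform Q z <= c1 -> qform P xt <= c2 ->
    qform Q (nz z xt) < c1.
  move=> z xt hz hx.
  case: DQ => [Z|[ez [lq0 bQ]]]; first by rewrite (Z (nz z xt)) qform0.
  have a1 := al1 ez.
  have hA := CAz xt hx.
  case: (eqVneq z 0) => [->|zn0].
    apply: le_lt_trans (H1z ez xt) _; apply: le_lt_trans hA _.
    rewrite /c1; nra.
  have := H1' z xt zn0; have := qform_ge0 z pQ.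
  move: hz hA; rewrite /c1.
  move: (qform Q (nz z xt)) (qform Q z) (g1 * sq (C *m xt)) => A B D.
  nra.
have PW2 : forall z xt, qform Q z <= c1 -> qform P xt <= c2 ->
    qform P (nt z xt) < c2.
  move=> z xt hz hx.
  case: DP => [Z|[ex [lp0 bP]]]; first by rewrite (Z (nt z xt)) qform0.
  have a2 := al2 ex.
  have hB := CBz z hz.
  case: (eqVneq xt 0) => [->|xn0].
    apply: le_lt_trans (H2z ex z) _; apply: le_lt_trans hB _.
    nra.
  have := H2' z xt xn0; have := qform_ge0 xt pP.
  move: hx hB c20.
  move: (qform P (nt z xt)) (qform P xt) (g21 * sq (K1 *m z)) (g22 * sq (dsubmx z)) => A B D D'.
  nra.
pose K := [set w : 'rV[R]_(n1 + n2 + n2) | qform Q (zz w) <= c1 /\ qform P (tt w) <= c2].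
have entK : forall z xt, qform Q z <= c1 -> qform P xt <= c2 ->
    forall j, `|(row_mx z^T xt^T : 'rV[R]_(n1 + n2 + n2)) 0 j| < δ.
  move=> z xt hz hx j; case: (split_ordP j) => [j' ->|j' ->].
    by rewrite row_mxEl mxE; exact: Ez.
  by rewrite row_mxEr mxE; exact: Ex.
have cK : compact K.
  apply: (compact_box (B := δ)).
    have -> : K = [set w | qform Q (zz w) <= c1] `&` [set w | qform P (tt w) <= c2].
      by [].
    by apply: closedI; apply: closed_sub; apply: cont_qform.
  move=> w [hz hx] j.
  have := entK _ _ hz hx j; rewrite -/(zz w) -/(tt w).
  have -> : row_mx (zz w)^T (tt w)^T = w by rewrite /zz /tt !trmxK hsubmxK.
  exact: ltW.
have K0 : K !=set0.
  by exists 0; rewrite /K /= zz00 tt00 !qform0; split; apply: ltW.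
have [w1 w1K max1] := EVT_max_rV K0 cK
  (continuous_subspaceT (cont_qform (M := Q) ccnz)).
have [w2 w2K max2] := EVT_max_rV K0 cK
  (continuous_subspaceT (cont_qform (M := P) ccnt)).
set E1 := qform Q (nz (zz w1) (tt w1)) in max1.
set E2 := qform P (nt (zz w2) (tt w2)) in max2.
have w1K' := w1K; rewrite inE in w1K'.
have w2K' := w2K; rewrite inE in w2K'.
have E1lt : E1 < c1 := PW1 _ _ w1K'.1 w1K'.2.
have E2lt : E2 < c2 := PW2 _ _ w2K'.1 w2K'.2.
pose L1 := Num.max (E1 / c1) (1 / 4).
pose L2 := Num.max (E2 / c2) (1 / 4).
have L10 : 0 < L1 by rewrite /L1 lt_max; apply/orP; right.
have L20 : 0 < L2 by rewrite /L2 lt_max; apply/orP; right.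
have L11 : L1 < 1.
  rewrite /L1 gt_max ltr_pdivrMr // (mul1r c1) E1lt /=; lra.
have L21 : L2 < 1.
  rewrite /L2 gt_max ltr_pdivrMr // (mul1r c2) E2lt /=; lra.
have E1L : E1 <= L1 * c1.
  by rewrite -ler_pdivrMr // /L1 le_max lexx.
have E2L : E2 <= L2 * c2.
  by rewrite -ler_pdivrMr // /L2 le_max lexx.
exists [set z | qform Q z <= c1], [set x | qform P x <= c2],
  (Num.sqrt L1), (Num.sqrt L2).
split; first exact: oi_qform.
split; first exact: oi_qform.
split; first by rewrite sqrtr_ge0 /= -sqrtr1 ltr_sqrt.
split; first by rewrite sqrtr_ge0 /= -sqrtr1 ltr_sqrt.
suff Main : forall z xt, qform Q z <= c1 -> qform P xt <= c2 ->
    U (uu z xt) /\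
    scale_set (Num.sqrt L1) [set z | qform Q z <= c1] (nz z xt) /\
    scale_set (Num.sqrt L2) [set x | qform P x <= c2] (nt z xt).
  move=> x1 x2 xf /= h1 h2; have := Main _ _ h1 h2.
  by rewrite /nz /nt /uu /= col_mxKu col_mxKd subrK.
move=> z xt hz hx.
have wK : row_mx z^T xt^T \in K.
  by rewrite inE /K /= zzrow ttrow.
split.
  have := Hδ _ (entK _ _ hz hx); rewrite zzrow ttrow => h.
  apply: Ur; exact: (vnorm_lt r0 h).
split.
  apply: scale_qform => //; apply: le_trans E1L.
  by have := max1 _ wK; rewrite zzrow ttrow.
apply: scale_qform => //; apply: le_trans E2L.
by have := max2 _ wK; rewrite zzrow ttrow.
Qed.
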